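(* The polynomials $P_1=(xyz-z+y+x)^2$, $P_2=(yz-xz+xy+1)^2$, $P_3=(yz-xz-xy-1)^2$, $P_4=(xz+yz+xy-1)^2$ are extremal polynomials in the classes $Q_P(2,2,2)$ and $\sigma_P(2,2,2)$.
   Context: $\sigma_P(2,2,2)$ is the set of real polynomials $f(x,y,z)=\sum_{0\le k,\ell,m\le2}a_{k,\ell,m}x^ky^\ell z^m$ that are nonnegative on $\mathbb R^3$; $Q_P(2,2,2)$ is the set of $f\in\sigma_P(2,2,2)$ that can be written as $\sum_{j=1}^r|F_j(x,y,z)|^2$ with polynomials $F_j$. An element $f$ of a convex cone $U$ is extremal in $U$ if whenever $f=g+h$ with $g,h\in U$, both $g$ and $h$ are nonnegative multiples of $f$. *)

(* Defs.v *)
(* real polynomials in x,y,z are represented by their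
   polynomial functions R -> R -> R -> R (polynomial functions over the
   infinite field R determine the polynomial uniquely). *)
From Stdlib Require Import Reals.
Open Scope R_scope.

Definition poly_eval (n : nat) (a : nat -> nat -> nat -> R) (x y z : R) : R :=
  sum_f_R0 (fun k => sum_f_R0 (fun l => sum_f_R0 (fun m =>
     a k l m * x ^ k * y ^ l * z ^ m) n) n) n.

Definition is_poly3 (f : R -> R -> R -> R) : Prop :=
  exists (n : nat) (a : nat -> nat -> nat -> R),
    forall x y z, f x y z = poly_eval n a x y z.

Definition is_P222 (f : R -> R -> R -> R) : Prop :=
  exists a : nat -> nat -> nat -> R, forall x y z, f x y z = poly_eval 2 a x y z.

Definition sigmaP222 (f : R -> R -> R -> R) : Prop :=
  is_P222 f /\ forall x y z, 0 <= f x y z.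

Definition QP222 (f : R -> R -> R -> R) : Prop :=
  sigmaP222 f /\
  exists (r : nat) (F : nat -> R -> R -> R -> R),
    (forall j, (j < r)%nat -> is_poly3 (F j)) /\
    forall x y z, f x y z = sum_f_R0 (fun j => if Nat.ltb j r then (F j x y z) ^ 2 else 0) r.

Definition extremal (U : (R -> R -> R -> R) -> Prop) (f : R -> R -> R -> R) : Prop :=
  U f /\
  forall g h, U g -> U h -> (forall x y z, f x y z = g x y z + h x y z) ->
    (exists c, 0 <= c /\ forall x y z, g x y z = c * f x y z) /\
    (exists c, 0 <= c /\ forall x y z, h x y z = c * f x y z).

Definition P1 (x y z : R) : R := (x*y*z - z + y + x) ^ 2.
Definition P2 (x y z : R) : R := (y*z - x*z + x*y + 1) ^ 2.
Definition P3 (x y z : R) : R := (y*z - x*z - x*y - 1) ^ 2.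
Definition P4 (x y z : R) : R := (x*z + y*z + x*y - 1) ^ 2.

(* Main.v *)
Require Import Defs.
From Stdlib Require Import Reals Lra Psatz.
Open Scope R_scope.

Definition Lm t := t*(t-1)/2.
Definition L0 t := 1 - t^2.
Definition Lp t := t*(t+1)/2.

Lemma interp_z f : is_P222 f -> forall x y z,
  f x y z = f x y (-1) * Lm z + f x y 0 * L0 z + f x y 1 * Lp z.
Proof. intros [a Ha] x y z. rewrite !Ha. unfold poly_eval, Lm, L0, Lp. simpl. field. Qed.
Lemma interp_y f : is_P222 f -> forall x y z,
  f x y z = f x (-1) z * Lm y + f x 0 z * L0 y + f x 1 z * Lp y.
Proof. intros [a Ha] x y z. rewrite !Ha. unfold poly_eval, Lm, L0, Lp. simpl. field. Qed.
Lemma interp_x f : is_P222 f -> forall x y z,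
  f x y z = f (-1) y z * Lm x + f 0 y z * L0 x + f 1 y z * Lp x.
Proof. intros [a Ha] x y z. rewrite !Ha. unfold poly_eval, Lm, L0, Lp. simpl. field. Qed.

Lemma bounded_lin b d M : (forall t, 0 <= b*t + d <= M) -> b = 0.
Proof.
  intros H. destruct (Req_dec b 0) as [|Hb]; auto.
  specialize (H ((M - d + 1)/b)). exfalso.
  replace (b * ((M - d + 1) / b) + d) with (M+1) in H by (field; auto). lra.
Qed.

Lemma bounded_quad a b d M : (forall t, 0 <= a*t^2 + b*t + d <= M) -> a = 0 /\ b = 0.
Proof.
  intros H.
  assert (Ha : a = 0).
  { destruct (Rtotal_order a 0) as [Hn|[E|Hp]]; auto; exfalso.
    -
      assert (Hd : 0 <= d) by (specialize (H 0); lra).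
      set (s := d/(-a) + 1).
      assert (Hs : 1 <= s) by (unfold s; assert (0 <= d/(-a)) by (unfold Rdiv; apply Rmult_le_pos; [lra| left; apply Rinv_0_lt_compat; lra]); lra).
      assert (H1 := H s). assert (H2 := H (-s)).
      assert (0 <= s^2 - s) by (simpl; nra). assert (0 <= (-a)*(s^2-s)) by (apply Rmult_le_pos; lra). assert (a*s^2 <= a*s) by (assert (a*s^2 - a*s = -((-a)*(s^2-s))) by ring; lra).
      assert (a*s = -d + a) by (unfold s; field; lra).
      nra.
    - assert (Hd : d <= M) by (specialize (H 0); lra).
      set (s := (M-d)/a + 1).
      assert (Hs : 1 <= s) by (unfold s; assert (0 <= (M-d)/a) by (unfold Rdiv; apply Rmult_le_pos; [lra| left; apply Rinv_0_lt_compat; lra]); lra).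
      assert (H1 := H s). assert (H2 := H (-s)).
      assert (0 <= s^2 - s) by (simpl; nra). assert (0 <= a*(s^2-s)) by (apply Rmult_le_pos; lra). assert (a*s^2 >= a*s) by (assert (a*s^2 - a*s = a*(s^2-s)) by ring; lra).
      assert (a*s = M - d + a) by (unfold s; field; lra).
      nra. }
  split; auto. subst a. apply (bounded_lin b d M). intros t. specialize (H t). lra.
Qed.

Lemma quad_sq a b d al be :
  (forall t, 0 <= a*t^2 + b*t + d <= (al*t+be)^2) ->
  exists k, forall t, a*t^2 + b*t + d = k * (al*t+be)^2.
Proof.
  intros H. destruct (Req_dec al 0) as [E|Hal].
  - subst al. destruct (bounded_quad a b d (be^2)) as [-> ->].
    { intros t. specialize (H t). lra. }
    destruct (Req_dec be 0) as [E|Hbe].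
    + subst be. exists 0. intros t. specialize (H 0). simpl in H. nra.
    + exists (d/be^2). intros t. field. auto.
  - set (t0 := - be/al).
    assert (Hq0 : a*t0^2 + b*t0 + d = 0).
    { specialize (H t0). replace (al*t0+be) with 0 in H by (unfold t0; field; auto). lra. }
    set (D := 2*a*t0 + b).
    assert (Hsh : forall s, a*(t0+s)^2 + b*(t0+s) + d = D*s + a*s^2)
      by (intros s; unfold D; nra).
    assert (HD : D = 0).
    { destruct (Req_dec D 0) as [|HD]; auto. exfalso.
      set (e := 1/(Rabs a + 1)).
      assert (He : 0 < e) by (unfold e; assert (0 <= Rabs a) by apply Rabs_pos; apply Rdiv_lt_0_compat; lra).
      assert (Hae : a*e < 1).
      { unfold e. assert (a <= Rabs a) by apply RRle_abs. assert (0 <= Rabs a) by apply Rabs_pos.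
        apply (Rmult_lt_reg_r (Rabs a + 1)); [lra|]. field_simplify; lra. }
      specialize (H (t0 + (-D*e))). rewrite Hsh in H.
      assert (0 < D^2) by (simpl; nra).
      assert (E1 : D*(-D*e) + a*(-D*e)^2 = -(D^2*e*(1 - a*e))) by ring.
      assert (0 < D^2*e*(1-a*e)) by (apply Rmult_lt_0_compat; [apply Rmult_lt_0_compat|]; lra).
      lra. }
    exists (a/al^2). intros t.
    replace t with (t0 + (t - t0)) at 1 2 by ring. rewrite Hsh, HD.
    unfold t0. field. auto.
Qed.

Lemma line1 (q r : R -> R) :
  (forall t, q t = q (-1) * Lm t + q 0 * L0 t + q 1 * Lp t) ->
  (exists al be, forall t, r t = (al*t+be)^2) ->
  (forall t, 0 <= q t <= r t) ->
  forall t1 t2 c, r t2 <> 0 -> q t2 = c * r t2 -> q t1 = c * r t1.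
Proof.
  intros Hq [al [be Hr]] Hb t1 t2 c Hr2 E2.
  set (A := (q 1 + q (-1))/2 - q 0). set (B := (q 1 - q (-1))/2). set (C := q 0).
  assert (Hq' : forall t, q t = A*t^2 + B*t + C)
    by (intros t; rewrite Hq; unfold A, B, C, Lm, L0, Lp; field).
  destruct (quad_sq A B C al be) as [k Hk].
  { intros t. rewrite <- Hq', <- Hr. apply Hb. }
  assert (Hk' : forall t, q t = k * r t) by (intros t; rewrite Hq', Hr; apply Hk).
  rewrite Hk' in E2. assert (k = c).
  { apply (Rmult_eq_reg_r (r t2)); auto. }
  subst. apply Hk'.
Qed.


Definition lines (P : R -> R -> R -> R) : Prop :=
  (forall y z, exists al be, forall t, P t y z = (al*t+be)^2) /\
  (forall x z, exists al be, forall t, P x t z = (al*t+be)^2) /\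
  (forall x y, exists al be, forall t, P x y t = (al*t+be)^2).

Definition below (g P : R -> R -> R -> R) : Prop :=
  is_P222 g /\ forall x y z, 0 <= g x y z <= P x y z.

Lemma trans_x g P c : lines P -> below g P -> forall y z t1 t2,
  P t2 y z <> 0 -> g t2 y z = c * P t2 y z -> g t1 y z = c * P t1 y z.
Proof.
  intros [Hx _] [Hg Hb] y z t1 t2.
  apply (line1 (fun t => g t y z) (fun t => P t y z)); auto.
  intros t; apply (interp_x g Hg).
Qed.
Lemma trans_y g P c : lines P -> below g P -> forall x z t1 t2,
  P x t2 z <> 0 -> g x t2 z = c * P x t2 z -> g x t1 z = c * P x t1 z.
Proof.
  intros [_ [Hy _]] [Hg Hb] x z t1 t2.
  apply (line1 (fun t => g x t z) (fun t => P x t z)); auto.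
  intros t; apply (interp_y g Hg).
Qed.
Lemma trans_z g P c : lines P -> below g P -> forall x y t1 t2,
  P x y t2 <> 0 -> g x y t2 = c * P x y t2 -> g x y t1 = c * P x y t1.
Proof.
  intros [_ [_ Hz]] [Hg Hb] x y t1 t2.
  apply (line1 (fun t => g x y t) (fun t => P x y t)); auto.
  intros t; apply (interp_z g Hg).
Qed.
Lemma zero_pt g P c : below g P -> forall x y z, P x y z = 0 -> g x y z = c * P x y z.
Proof. intros [_ Hb] x y z E. specialize (Hb x y z). rewrite E in *. lra. Qed.

Definition grid (x : R) := x = -1 \/ x = 0 \/ x = 1.

Lemma vanish f : is_P222 f -> (forall x y z, grid x -> grid y -> grid z -> f x y z = 0) ->
  forall x y z, f x y z = 0.
Proof.
  intros Hf H.
  assert (H1 : forall x y z, grid y -> grid z -> f x y z = 0).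
  { intros x y z Hy Hz. rewrite (interp_x f Hf). rewrite !H; try red; auto. ring. }
  assert (H2 : forall x y z, grid z -> f x y z = 0).
  { intros x y z Hz. rewrite (interp_y f Hf). rewrite !H1; try red; auto. ring. }
  intros x y z. rewrite (interp_z f Hf). rewrite !H2; try red; auto. ring.
Qed.

Lemma ray P (x0 y0 z0 : R) : lines P -> is_P222 P -> 0 < P x0 y0 z0 ->
  (forall g c, below g P -> g x0 y0 z0 = c * P x0 y0 z0 ->
     forall x y z, grid x -> grid y -> grid z -> g x y z = c * P x y z) ->
  forall g, below g P -> exists c, 0 <= c /\ forall x y z, g x y z = c * P x y z.
Proof.
  intros HL HP Hpos Hgrid g Hb.
  set (c := g x0 y0 z0 / P x0 y0 z0).
  assert (E0 : g x0 y0 z0 = c * P x0 y0 z0) by (unfold c; field; lra).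
  exists c. split.
  { unfold c. destruct Hb as [_ Hb]. specialize (Hb x0 y0 z0).
    unfold Rdiv; apply Rmult_le_pos; [lra| left; apply Rinv_0_lt_compat; lra]. }
  assert (HD : is_P222 (fun x y z => g x y z - c * P x y z)).
  { destruct Hb as [[a Ha] _]. destruct HP as [b Hb'].
    exists (fun k l m => a k l m - c * b k l m). intros x y z.
    rewrite Ha, Hb'. unfold poly_eval. simpl. ring. }
  intros x y z.
  assert (V := vanish _ HD). 
  assert (g x y z - c * P x y z = 0); [|lra].
  apply V. intros. assert (g x1 y1 z1 = c * P x1 y1 z1) by (apply Hgrid; auto). lra.
Qed.

Lemma key P x0 y0 z0 : lines P -> is_P222 P -> 0 < P x0 y0 z0 ->
  (forall g c, below g P -> g x0 y0 z0 = c * P x0 y0 z0 ->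
     forall x y z, grid x -> grid y -> grid z -> g x y z = c * P x y z) ->
  forall g h, sigmaP222 g -> sigmaP222 h -> (forall x y z, P x y z = g x y z + h x y z) ->
    (exists c, 0 <= c /\ forall x y z, g x y z = c * P x y z) /\
    (exists c, 0 <= c /\ forall x y z, h x y z = c * P x y z).
Proof.
  intros HL HP Hpos Hgrid g h [Hg Hg0] [Hh Hh0] E.
  split; apply (ray P x0 y0 z0 HL HP Hpos Hgrid); split; auto;
    intros x y z; specialize (Hg0 x y z); specialize (Hh0 x y z); specialize (E x y z); lra.
Qed.

Lemma extremal_both P x0 y0 z0 : lines P -> is_P222 P -> QP222 P -> 0 < P x0 y0 z0 ->
  (forall g c, below g P -> g x0 y0 z0 = c * P x0 y0 z0 ->
     forall x y z, grid x -> grid y -> grid z -> g x y z = c * P x y z) ->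
  extremal QP222 P /\ extremal sigmaP222 P.
Proof.
  intros HL HP HQ Hpos Hgrid. split; split.
  - exact HQ.
  - intros g h Hg Hh. apply (key P x0 y0 z0); auto; [apply Hg|apply Hh].
  - apply HQ.
  - intros g h Hg Hh. apply (key P x0 y0 z0); auto.
Qed.

Lemma QP_of_sq P p : is_P222 P -> is_poly3 p -> (forall x y z, P x y z = (p x y z)^2) -> QP222 P.
Proof.
  intros HP Hp E. split.
  - split; auto. intros; rewrite E. apply pow2_ge_0.
  - exists 1%nat, (fun _ => p). split.
    + intros; auto.
    + intros x y z. simpl. rewrite E. ring.
Qed.
Lemma P1_222 : is_P222 P1.
Proof. exists (fun k l m => match k, l, m with 0%nat, 0%nat, 2%nat => 1 | 0%nat, 1%nat, 1%nat => (-2) | 0%nat, 2%nat, 0%nat => 1 | 1%nat, 0%nat, 1%nat => (-2) | 1%nat, 1%nat, 0%nat => 2 | 1%nat, 1%nat, 2%nat => (-2) | 1%nat, 2%nat, 1%nat => 2 | 2%nat, 0%nat, 0%nat => 1 | 2%nat, 1%nat, 1%nat => 2 | 2%nat, 2%nat, 2%nat => 1 | _, _, _ => 0 end). intros x y z. unfold poly_eval, P1. simpl. ring. Qed.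

Lemma P1_p3 : is_poly3 (fun x y z => (1)*x*y*z + (-1)*z + (1)*y + (1)*x).
Proof. exists 1%nat, (fun k l m => match k, l, m with 0%nat, 0%nat, 1%nat => (-1) | 0%nat, 1%nat, 0%nat => 1 | 1%nat, 0%nat, 0%nat => 1 | 1%nat, 1%nat, 1%nat => 1 | _, _, _ => 0 end). intros x y z. unfold poly_eval. simpl. ring. Qed.

Lemma P1_sq : forall x y z, P1 x y z = ((1)*x*y*z + (-1)*z + (1)*y + (1)*x)^2.
Proof. intros; unfold P1; ring. Qed.

Lemma P1_lines : lines P1.
Proof. split; [|split].
- intros y z. exists ((1)*y*z + (1)*1), ((-1)*z + (1)*y). intros t. unfold P1. ring.
- intros x z. exists ((1)*x*z + (1)*1), ((-1)*z + (1)*x). intros t. unfold P1. ring.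
- intros x y. exists ((1)*x*y + (-1)*1), ((1)*y + (1)*x). intros t. unfold P1. ring.
Qed.

Lemma P1_grid : forall g c, below g P1 -> g (-1) (-1) (-1) = c * P1 (-1) (-1) (-1) ->
  forall x y z, grid x -> grid y -> grid z -> g x y z = c * P1 x y z.
Proof.
  intros g c Hb E0. assert (HL := P1_lines).
  assert (g (-1) (-1) 0 = c * P1 (-1) (-1) 0).
  { apply (trans_z g P1 c HL Hb (-1) (-1) 0 (-1)); [replace (P1 (-1) (-1) (-1)) with (4) by (unfold P1; ring); lra | assumption]. }
  assert (g (-1) (-1) 1 = c * P1 (-1) (-1) 1).
  { apply (trans_z g P1 c HL Hb (-1) (-1) 1 (-1)); [replace (P1 (-1) (-1) (-1)) with (4) by (unfold P1; ring); lra | assumption]. }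
  assert (g (-1) 1 (-1) = c * P1 (-1) 1 (-1)).
  { apply (trans_y g P1 c HL Hb (-1) (-1) 1 (-1)); [replace (P1 (-1) (-1) (-1)) with (4) by (unfold P1; ring); lra | assumption]. }
  assert (g 1 (-1) (-1) = c * P1 1 (-1) (-1)).
  { apply (trans_x g P1 c HL Hb (-1) (-1) 1 (-1)); [replace (P1 (-1) (-1) (-1)) with (4) by (unfold P1; ring); lra | assumption]. }
  assert (g (-1) 0 0 = c * P1 (-1) 0 0).
  { apply (trans_y g P1 c HL Hb (-1) 0 0 (-1)); [replace (P1 (-1) (-1) 0) with (4) by (unfold P1; ring); lra | assumption]. }
  assert (g 0 (-1) 0 = c * P1 0 (-1) 0).
  { apply (trans_x g P1 c HL Hb (-1) 0 0 (-1)); [replace (P1 (-1) (-1) 0) with (4) by (unfold P1; ring); lra | assumption]. }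
  assert (g (-1) 0 1 = c * P1 (-1) 0 1).
  { apply (trans_y g P1 c HL Hb (-1) 1 0 (-1)); [replace (P1 (-1) (-1) 1) with (4) by (unfold P1; ring); lra | assumption]. }
  assert (g (-1) 1 1 = c * P1 (-1) 1 1).
  { apply (trans_y g P1 c HL Hb (-1) 1 1 (-1)); [replace (P1 (-1) (-1) 1) with (4) by (unfold P1; ring); lra | assumption]. }
  assert (g 0 (-1) 1 = c * P1 0 (-1) 1).
  { apply (trans_x g P1 c HL Hb (-1) 1 0 (-1)); [replace (P1 (-1) (-1) 1) with (4) by (unfold P1; ring); lra | assumption]. }
  assert (g 1 (-1) 1 = c * P1 1 (-1) 1).
  { apply (trans_x g P1 c HL Hb (-1) 1 1 (-1)); [replace (P1 (-1) (-1) 1) with (4) by (unfold P1; ring); lra | assumption]. }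
  assert (g 0 1 (-1) = c * P1 0 1 (-1)).
  { apply (trans_x g P1 c HL Hb 1 (-1) 0 (-1)); [replace (P1 (-1) 1 (-1)) with (4) by (unfold P1; ring); lra | assumption]. }
  assert (g 1 1 (-1) = c * P1 1 1 (-1)).
  { apply (trans_x g P1 c HL Hb 1 (-1) 1 (-1)); [replace (P1 (-1) 1 (-1)) with (4) by (unfold P1; ring); lra | assumption]. }
  assert (g 1 0 (-1) = c * P1 1 0 (-1)).
  { apply (trans_y g P1 c HL Hb 1 (-1) 0 (-1)); [replace (P1 1 (-1) (-1)) with (4) by (unfold P1; ring); lra | assumption]. }
  assert (g 1 0 0 = c * P1 1 0 0).
  { apply (trans_x g P1 c HL Hb 0 0 1 (-1)); [replace (P1 (-1) 0 0) with (1) by (unfold P1; ring); lra | assumption]. }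
  assert (g 0 1 0 = c * P1 0 1 0).
  { apply (trans_y g P1 c HL Hb 0 0 1 (-1)); [replace (P1 0 (-1) 0) with (1) by (unfold P1; ring); lra | assumption]. }
  assert (g 0 0 1 = c * P1 0 0 1).
  { apply (trans_x g P1 c HL Hb 0 1 0 (-1)); [replace (P1 (-1) 0 1) with (4) by (unfold P1; ring); lra | assumption]. }
  assert (g 1 1 1 = c * P1 1 1 1).
  { apply (trans_x g P1 c HL Hb 1 1 1 (-1)); [replace (P1 (-1) 1 1) with (4) by (unfold P1; ring); lra | assumption]. }
  assert (g 0 0 (-1) = c * P1 0 0 (-1)).
  { apply (trans_y g P1 c HL Hb 0 (-1) 0 1); [replace (P1 0 1 (-1)) with (4) by (unfold P1; ring); lra | assumption]. }
  assert (g 1 1 0 = c * P1 1 1 0).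
  { apply (trans_z g P1 c HL Hb 1 1 0 (-1)); [replace (P1 1 1 (-1)) with (4) by (unfold P1; ring); lra | assumption]. }
  assert (g (-1) 0 (-1) = c * P1 (-1) 0 (-1)) by (apply (zero_pt g P1 c Hb); unfold P1; ring).
  assert (g (-1) 1 0 = c * P1 (-1) 1 0) by (apply (zero_pt g P1 c Hb); unfold P1; ring).
  assert (g 0 (-1) (-1) = c * P1 0 (-1) (-1)) by (apply (zero_pt g P1 c Hb); unfold P1; ring).
  assert (g 0 0 0 = c * P1 0 0 0) by (apply (zero_pt g P1 c Hb); unfold P1; ring).
  assert (g 0 1 1 = c * P1 0 1 1) by (apply (zero_pt g P1 c Hb); unfold P1; ring).
  assert (g 1 (-1) 0 = c * P1 1 (-1) 0) by (apply (zero_pt g P1 c Hb); unfold P1; ring).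
  assert (g 1 0 1 = c * P1 1 0 1) by (apply (zero_pt g P1 c Hb); unfold P1; ring).
  intros x y z [ -> | [ -> | -> ] ] [ -> | [ -> | -> ] ] [ -> | [ -> | -> ] ]; assumption.
Qed.

Lemma P1_ext : extremal QP222 P1 /\ extremal sigmaP222 P1.
Proof.
  apply (extremal_both P1 (-1) (-1) (-1) P1_lines P1_222).
  - apply (QP_of_sq _ _ P1_222 P1_p3 P1_sq).
  - replace (P1 (-1) (-1) (-1)) with (4) by (unfold P1; ring); lra.
  - apply P1_grid.
Qed.

Lemma P2_222 : is_P222 P2.
Proof. exists (fun k l m => match k, l, m with 0%nat, 0%nat, 0%nat => 1 | 0%nat, 1%nat, 1%nat => 2 | 0%nat, 2%nat, 2%nat => 1 | 1%nat, 0%nat, 1%nat => (-2) | 1%nat, 1%nat, 0%nat => 2 | 1%nat, 1%nat, 2%nat => (-2) | 1%nat, 2%nat, 1%nat => 2 | 2%nat, 0%nat, 2%nat => 1 | 2%nat, 1%nat, 1%nat => (-2) | 2%nat, 2%nat, 0%nat => 1 | _, _, _ => 0 end). intros x y z. unfold poly_eval, P2. simpl. ring. Qed.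

Lemma P2_p3 : is_poly3 (fun x y z => (1)*y*z + (-1)*x*z + (1)*x*y + (1)*1).
Proof. exists 1%nat, (fun k l m => match k, l, m with 0%nat, 0%nat, 0%nat => 1 | 0%nat, 1%nat, 1%nat => 1 | 1%nat, 0%nat, 1%nat => (-1) | 1%nat, 1%nat, 0%nat => 1 | _, _, _ => 0 end). intros x y z. unfold poly_eval. simpl. ring. Qed.

Lemma P2_sq : forall x y z, P2 x y z = ((1)*y*z + (-1)*x*z + (1)*x*y + (1)*1)^2.
Proof. intros; unfold P2; ring. Qed.

Lemma P2_lines : lines P2.
Proof. split; [|split].
- intros y z. exists ((-1)*z + (1)*y), ((1)*y*z + (1)*1). intros t. unfold P2. ring.
- intros x z. exists ((1)*z + (1)*x), ((-1)*x*z + (1)*1). intros t. unfold P2. ring.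
- intros x y. exists ((1)*y + (-1)*x), ((1)*x*y + (1)*1). intros t. unfold P2. ring.
Qed.

Lemma P2_grid : forall g c, below g P2 -> g (-1) (-1) (-1) = c * P2 (-1) (-1) (-1) ->
  forall x y z, grid x -> grid y -> grid z -> g x y z = c * P2 x y z.
Proof.
  intros g c Hb E0. assert (HL := P2_lines).
  assert (g (-1) (-1) 0 = c * P2 (-1) (-1) 0).
  { apply (trans_z g P2 c HL Hb (-1) (-1) 0 (-1)); [replace (P2 (-1) (-1) (-1)) with (4) by (unfold P2; ring); lra | assumption]. }
  assert (g (-1) (-1) 1 = c * P2 (-1) (-1) 1).
  { apply (trans_z g P2 c HL Hb (-1) (-1) 1 (-1)); [replace (P2 (-1) (-1) (-1)) with (4) by (unfold P2; ring); lra | assumption]. }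
  assert (g (-1) 1 (-1) = c * P2 (-1) 1 (-1)).
  { apply (trans_y g P2 c HL Hb (-1) (-1) 1 (-1)); [replace (P2 (-1) (-1) (-1)) with (4) by (unfold P2; ring); lra | assumption]. }
  assert (g 0 (-1) (-1) = c * P2 0 (-1) (-1)).
  { apply (trans_x g P2 c HL Hb (-1) (-1) 0 (-1)); [replace (P2 (-1) (-1) (-1)) with (4) by (unfold P2; ring); lra | assumption]. }
  assert (g 1 (-1) (-1) = c * P2 1 (-1) (-1)).
  { apply (trans_x g P2 c HL Hb (-1) (-1) 1 (-1)); [replace (P2 (-1) (-1) (-1)) with (4) by (unfold P2; ring); lra | assumption]. }
  assert (g (-1) 0 0 = c * P2 (-1) 0 0).
  { apply (trans_y g P2 c HL Hb (-1) 0 0 (-1)); [replace (P2 (-1) (-1) 0) with (4) by (unfold P2; ring); lra | assumption]. }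
  assert (g 0 (-1) 0 = c * P2 0 (-1) 0).
  { apply (trans_x g P2 c HL Hb (-1) 0 0 (-1)); [replace (P2 (-1) (-1) 0) with (4) by (unfold P2; ring); lra | assumption]. }
  assert (g (-1) 0 1 = c * P2 (-1) 0 1).
  { apply (trans_y g P2 c HL Hb (-1) 1 0 (-1)); [replace (P2 (-1) (-1) 1) with (4) by (unfold P2; ring); lra | assumption]. }
  assert (g (-1) 1 1 = c * P2 (-1) 1 1).
  { apply (trans_y g P2 c HL Hb (-1) 1 1 (-1)); [replace (P2 (-1) (-1) 1) with (4) by (unfold P2; ring); lra | assumption]. }
  assert (g 1 (-1) 1 = c * P2 1 (-1) 1).
  { apply (trans_x g P2 c HL Hb (-1) 1 1 (-1)); [replace (P2 (-1) (-1) 1) with (4) by (unfold P2; ring); lra | assumption]. }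
  assert (g 1 1 (-1) = c * P2 1 1 (-1)).
  { apply (trans_x g P2 c HL Hb 1 (-1) 1 (-1)); [replace (P2 (-1) 1 (-1)) with (4) by (unfold P2; ring); lra | assumption]. }
  assert (g 0 0 (-1) = c * P2 0 0 (-1)).
  { apply (trans_y g P2 c HL Hb 0 (-1) 0 (-1)); [replace (P2 0 (-1) (-1)) with (4) by (unfold P2; ring); lra | assumption]. }
  assert (g 1 0 (-1) = c * P2 1 0 (-1)).
  { apply (trans_y g P2 c HL Hb 1 (-1) 0 (-1)); [replace (P2 1 (-1) (-1)) with (4) by (unfold P2; ring); lra | assumption]. }
  assert (g 0 0 0 = c * P2 0 0 0).
  { apply (trans_x g P2 c HL Hb 0 0 0 (-1)); [replace (P2 (-1) 0 0) with (1) by (unfold P2; ring); lra | assumption]. }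
  assert (g 1 0 0 = c * P2 1 0 0).
  { apply (trans_x g P2 c HL Hb 0 0 1 (-1)); [replace (P2 (-1) 0 0) with (1) by (unfold P2; ring); lra | assumption]. }
  assert (g 0 1 0 = c * P2 0 1 0).
  { apply (trans_y g P2 c HL Hb 0 0 1 (-1)); [replace (P2 0 (-1) 0) with (1) by (unfold P2; ring); lra | assumption]. }
  assert (g 0 0 1 = c * P2 0 0 1).
  { apply (trans_x g P2 c HL Hb 0 1 0 (-1)); [replace (P2 (-1) 0 1) with (4) by (unfold P2; ring); lra | assumption]. }
  assert (g 0 1 1 = c * P2 0 1 1).
  { apply (trans_x g P2 c HL Hb 1 1 0 (-1)); [replace (P2 (-1) 1 1) with (4) by (unfold P2; ring); lra | assumption]. }
  assert (g 1 1 1 = c * P2 1 1 1).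
  { apply (trans_x g P2 c HL Hb 1 1 1 (-1)); [replace (P2 (-1) 1 1) with (4) by (unfold P2; ring); lra | assumption]. }
  assert (g 1 1 0 = c * P2 1 1 0).
  { apply (trans_z g P2 c HL Hb 1 1 0 (-1)); [replace (P2 1 1 (-1)) with (4) by (unfold P2; ring); lra | assumption]. }
  assert (g (-1) 0 (-1) = c * P2 (-1) 0 (-1)) by (apply (zero_pt g P2 c Hb); unfold P2; ring).
  assert (g (-1) 1 0 = c * P2 (-1) 1 0) by (apply (zero_pt g P2 c Hb); unfold P2; ring).
  assert (g 0 (-1) 1 = c * P2 0 (-1) 1) by (apply (zero_pt g P2 c Hb); unfold P2; ring).
  assert (g 0 1 (-1) = c * P2 0 1 (-1)) by (apply (zero_pt g P2 c Hb); unfold P2; ring).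
  assert (g 1 (-1) 0 = c * P2 1 (-1) 0) by (apply (zero_pt g P2 c Hb); unfold P2; ring).
  assert (g 1 0 1 = c * P2 1 0 1) by (apply (zero_pt g P2 c Hb); unfold P2; ring).
  intros x y z [ -> | [ -> | -> ] ] [ -> | [ -> | -> ] ] [ -> | [ -> | -> ] ]; assumption.
Qed.

Lemma P2_ext : extremal QP222 P2 /\ extremal sigmaP222 P2.
Proof.
  apply (extremal_both P2 (-1) (-1) (-1) P2_lines P2_222).
  - apply (QP_of_sq _ _ P2_222 P2_p3 P2_sq).
  - replace (P2 (-1) (-1) (-1)) with (4) by (unfold P2; ring); lra.
  - apply P2_grid.
Qed.

Lemma P3_222 : is_P222 P3.
Proof. exists (fun k l m => match k, l, m with 0%nat, 0%nat, 0%nat => 1 | 0%nat, 1%nat, 1%nat => (-2) | 0%nat, 2%nat, 2%nat => 1 | 1%nat, 0%nat, 1%nat => 2 | 1%nat, 1%nat, 0%nat => 2 | 1%nat, 1%nat, 2%nat => (-2) | 1%nat, 2%nat, 1%nat => (-2) | 2%nat, 0%nat, 2%nat => 1 | 2%nat, 1%nat, 1%nat => 2 | 2%nat, 2%nat, 0%nat => 1 | _, _, _ => 0 end). intros x y z. unfold poly_eval, P3. simpl. ring. Qed.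

Lemma P3_p3 : is_poly3 (fun x y z => (1)*y*z + (-1)*x*z + (-1)*x*y + (-1)*1).
Proof. exists 1%nat, (fun k l m => match k, l, m with 0%nat, 0%nat, 0%nat => (-1) | 0%nat, 1%nat, 1%nat => 1 | 1%nat, 0%nat, 1%nat => (-1) | 1%nat, 1%nat, 0%nat => (-1) | _, _, _ => 0 end). intros x y z. unfold poly_eval. simpl. ring. Qed.

Lemma P3_sq : forall x y z, P3 x y z = ((1)*y*z + (-1)*x*z + (-1)*x*y + (-1)*1)^2.
Proof. intros; unfold P3; ring. Qed.

Lemma P3_lines : lines P3.
Proof. split; [|split].
- intros y z. exists ((-1)*z + (-1)*y), ((1)*y*z + (-1)*1). intros t. unfold P3. ring.
- intros x z. exists ((1)*z + (-1)*x), ((-1)*x*z + (-1)*1). intros t. unfold P3. ring.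
- intros x y. exists ((1)*y + (-1)*x), ((-1)*x*y + (-1)*1). intros t. unfold P3. ring.
Qed.

Lemma P3_grid : forall g c, below g P3 -> g (-1) (-1) (-1) = c * P3 (-1) (-1) (-1) ->
  forall x y z, grid x -> grid y -> grid z -> g x y z = c * P3 x y z.
Proof.
  intros g c Hb E0. assert (HL := P3_lines).
  assert (g (-1) (-1) 0 = c * P3 (-1) (-1) 0).
  { apply (trans_z g P3 c HL Hb (-1) (-1) 0 (-1)); [replace (P3 (-1) (-1) (-1)) with (4) by (unfold P3; ring); lra | assumption]. }
  assert (g (-1) (-1) 1 = c * P3 (-1) (-1) 1).
  { apply (trans_z g P3 c HL Hb (-1) (-1) 1 (-1)); [replace (P3 (-1) (-1) (-1)) with (4) by (unfold P3; ring); lra | assumption]. }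
  assert (g (-1) 0 (-1) = c * P3 (-1) 0 (-1)).
  { apply (trans_y g P3 c HL Hb (-1) (-1) 0 (-1)); [replace (P3 (-1) (-1) (-1)) with (4) by (unfold P3; ring); lra | assumption]. }
  assert (g (-1) 1 (-1) = c * P3 (-1) 1 (-1)).
  { apply (trans_y g P3 c HL Hb (-1) (-1) 1 (-1)); [replace (P3 (-1) (-1) (-1)) with (4) by (unfold P3; ring); lra | assumption]. }
  assert (g 1 (-1) (-1) = c * P3 1 (-1) (-1)).
  { apply (trans_x g P3 c HL Hb (-1) (-1) 1 (-1)); [replace (P3 (-1) (-1) (-1)) with (4) by (unfold P3; ring); lra | assumption]. }
  assert (g (-1) 0 0 = c * P3 (-1) 0 0).
  { apply (trans_y g P3 c HL Hb (-1) 0 0 (-1)); [replace (P3 (-1) (-1) 0) with (4) by (unfold P3; ring); lra | assumption]. }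
  assert (g 0 (-1) 0 = c * P3 0 (-1) 0).
  { apply (trans_x g P3 c HL Hb (-1) 0 0 (-1)); [replace (P3 (-1) (-1) 0) with (4) by (unfold P3; ring); lra | assumption]. }
  assert (g (-1) 1 1 = c * P3 (-1) 1 1).
  { apply (trans_y g P3 c HL Hb (-1) 1 1 (-1)); [replace (P3 (-1) (-1) 1) with (4) by (unfold P3; ring); lra | assumption]. }
  assert (g 0 (-1) 1 = c * P3 0 (-1) 1).
  { apply (trans_x g P3 c HL Hb (-1) 1 0 (-1)); [replace (P3 (-1) (-1) 1) with (4) by (unfold P3; ring); lra | assumption]. }
  assert (g 1 (-1) 1 = c * P3 1 (-1) 1).
  { apply (trans_x g P3 c HL Hb (-1) 1 1 (-1)); [replace (P3 (-1) (-1) 1) with (4) by (unfold P3; ring); lra | assumption]. }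
  assert (g 0 0 (-1) = c * P3 0 0 (-1)).
  { apply (trans_x g P3 c HL Hb 0 (-1) 0 (-1)); [replace (P3 (-1) 0 (-1)) with (4) by (unfold P3; ring); lra | assumption]. }
  assert (g 0 1 (-1) = c * P3 0 1 (-1)).
  { apply (trans_x g P3 c HL Hb 1 (-1) 0 (-1)); [replace (P3 (-1) 1 (-1)) with (4) by (unfold P3; ring); lra | assumption]. }
  assert (g 1 1 (-1) = c * P3 1 1 (-1)).
  { apply (trans_x g P3 c HL Hb 1 (-1) 1 (-1)); [replace (P3 (-1) 1 (-1)) with (4) by (unfold P3; ring); lra | assumption]. }
  assert (g 0 0 0 = c * P3 0 0 0).
  { apply (trans_x g P3 c HL Hb 0 0 0 (-1)); [replace (P3 (-1) 0 0) with (1) by (unfold P3; ring); lra | assumption]. }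
  assert (g 1 0 0 = c * P3 1 0 0).
  { apply (trans_x g P3 c HL Hb 0 0 1 (-1)); [replace (P3 (-1) 0 0) with (1) by (unfold P3; ring); lra | assumption]. }
  assert (g 0 1 0 = c * P3 0 1 0).
  { apply (trans_y g P3 c HL Hb 0 0 1 (-1)); [replace (P3 0 (-1) 0) with (1) by (unfold P3; ring); lra | assumption]. }
  assert (g 1 1 1 = c * P3 1 1 1).
  { apply (trans_x g P3 c HL Hb 1 1 1 (-1)); [replace (P3 (-1) 1 1) with (4) by (unfold P3; ring); lra | assumption]. }
  assert (g 0 0 1 = c * P3 0 0 1).
  { apply (trans_y g P3 c HL Hb 0 1 0 (-1)); [replace (P3 0 (-1) 1) with (4) by (unfold P3; ring); lra | assumption]. }
  assert (g 1 0 1 = c * P3 1 0 1).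
  { apply (trans_y g P3 c HL Hb 1 1 0 (-1)); [replace (P3 1 (-1) 1) with (4) by (unfold P3; ring); lra | assumption]. }
  assert (g 1 1 0 = c * P3 1 1 0).
  { apply (trans_z g P3 c HL Hb 1 1 0 (-1)); [replace (P3 1 1 (-1)) with (4) by (unfold P3; ring); lra | assumption]. }
  assert (g (-1) 0 1 = c * P3 (-1) 0 1) by (apply (zero_pt g P3 c Hb); unfold P3; ring).
  assert (g (-1) 1 0 = c * P3 (-1) 1 0) by (apply (zero_pt g P3 c Hb); unfold P3; ring).
  assert (g 0 (-1) (-1) = c * P3 0 (-1) (-1)) by (apply (zero_pt g P3 c Hb); unfold P3; ring).
  assert (g 0 1 1 = c * P3 0 1 1) by (apply (zero_pt g P3 c Hb); unfold P3; ring).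
  assert (g 1 (-1) 0 = c * P3 1 (-1) 0) by (apply (zero_pt g P3 c Hb); unfold P3; ring).
  assert (g 1 0 (-1) = c * P3 1 0 (-1)) by (apply (zero_pt g P3 c Hb); unfold P3; ring).
  intros x y z [ -> | [ -> | -> ] ] [ -> | [ -> | -> ] ] [ -> | [ -> | -> ] ]; assumption.
Qed.

Lemma P3_ext : extremal QP222 P3 /\ extremal sigmaP222 P3.
Proof.
  apply (extremal_both P3 (-1) (-1) (-1) P3_lines P3_222).
  - apply (QP_of_sq _ _ P3_222 P3_p3 P3_sq).
  - replace (P3 (-1) (-1) (-1)) with (4) by (unfold P3; ring); lra.
  - apply P3_grid.
Qed.

Lemma P4_222 : is_P222 P4.
Proof. exists (fun k l m => match k, l, m with 0%nat, 0%nat, 0%nat => 1 | 0%nat, 1%nat, 1%nat => (-2) | 0%nat, 2%nat, 2%nat => 1 | 1%nat, 0%nat, 1%nat => (-2) | 1%nat, 1%nat, 0%nat => (-2) | 1%nat, 1%nat, 2%nat => 2 | 1%nat, 2%nat, 1%nat => 2 | 2%nat, 0%nat, 2%nat => 1 | 2%nat, 1%nat, 1%nat => 2 | 2%nat, 2%nat, 0%nat => 1 | _, _, _ => 0 end). intros x y z. unfold poly_eval, P4. simpl. ring. Qed.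

Lemma P4_p3 : is_poly3 (fun x y z => (1)*x*z + (1)*y*z + (1)*x*y + (-1)*1).
Proof. exists 1%nat, (fun k l m => match k, l, m with 0%nat, 0%nat, 0%nat => (-1) | 0%nat, 1%nat, 1%nat => 1 | 1%nat, 0%nat, 1%nat => 1 | 1%nat, 1%nat, 0%nat => 1 | _, _, _ => 0 end). intros x y z. unfold poly_eval. simpl. ring. Qed.

Lemma P4_sq : forall x y z, P4 x y z = ((1)*x*z + (1)*y*z + (1)*x*y + (-1)*1)^2.
Proof. intros; unfold P4; ring. Qed.

Lemma P4_lines : lines P4.
Proof. split; [|split].
- intros y z. exists ((1)*z + (1)*y), ((1)*y*z + (-1)*1). intros t. unfold P4. ring.
- intros x z. exists ((1)*z + (1)*x), ((1)*x*z + (-1)*1). intros t. unfold P4. ring.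
- intros x y. exists ((1)*x + (1)*y), ((1)*x*y + (-1)*1). intros t. unfold P4. ring.
Qed.

Lemma P4_grid : forall g c, below g P4 -> g (-1) (-1) (-1) = c * P4 (-1) (-1) (-1) ->
  forall x y z, grid x -> grid y -> grid z -> g x y z = c * P4 x y z.
Proof.
  intros g c Hb E0. assert (HL := P4_lines).
  assert (g (-1) (-1) 1 = c * P4 (-1) (-1) 1).
  { apply (trans_z g P4 c HL Hb (-1) (-1) 1 (-1)); [replace (P4 (-1) (-1) (-1)) with (4) by (unfold P4; ring); lra | assumption]. }
  assert (g (-1) 1 (-1) = c * P4 (-1) 1 (-1)).
  { apply (trans_y g P4 c HL Hb (-1) (-1) 1 (-1)); [replace (P4 (-1) (-1) (-1)) with (4) by (unfold P4; ring); lra | assumption]. }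
  assert (g 1 (-1) (-1) = c * P4 1 (-1) (-1)).
  { apply (trans_x g P4 c HL Hb (-1) (-1) 1 (-1)); [replace (P4 (-1) (-1) (-1)) with (4) by (unfold P4; ring); lra | assumption]. }
  assert (g (-1) 0 1 = c * P4 (-1) 0 1).
  { apply (trans_y g P4 c HL Hb (-1) 1 0 (-1)); [replace (P4 (-1) (-1) 1) with (4) by (unfold P4; ring); lra | assumption]. }
  assert (g (-1) 1 1 = c * P4 (-1) 1 1).
  { apply (trans_y g P4 c HL Hb (-1) 1 1 (-1)); [replace (P4 (-1) (-1) 1) with (4) by (unfold P4; ring); lra | assumption]. }
  assert (g 0 (-1) 1 = c * P4 0 (-1) 1).
  { apply (trans_x g P4 c HL Hb (-1) 1 0 (-1)); [replace (P4 (-1) (-1) 1) with (4) by (unfold P4; ring); lra | assumption]. }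
  assert (g 1 (-1) 1 = c * P4 1 (-1) 1).
  { apply (trans_x g P4 c HL Hb (-1) 1 1 (-1)); [replace (P4 (-1) (-1) 1) with (4) by (unfold P4; ring); lra | assumption]. }
  assert (g (-1) 1 0 = c * P4 (-1) 1 0).
  { apply (trans_z g P4 c HL Hb (-1) 1 0 (-1)); [replace (P4 (-1) 1 (-1)) with (4) by (unfold P4; ring); lra | assumption]. }
  assert (g 0 1 (-1) = c * P4 0 1 (-1)).
  { apply (trans_x g P4 c HL Hb 1 (-1) 0 (-1)); [replace (P4 (-1) 1 (-1)) with (4) by (unfold P4; ring); lra | assumption]. }
  assert (g 1 1 (-1) = c * P4 1 1 (-1)).
  { apply (trans_x g P4 c HL Hb 1 (-1) 1 (-1)); [replace (P4 (-1) 1 (-1)) with (4) by (unfold P4; ring); lra | assumption]. }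
  assert (g 1 (-1) 0 = c * P4 1 (-1) 0).
  { apply (trans_z g P4 c HL Hb 1 (-1) 0 (-1)); [replace (P4 1 (-1) (-1)) with (4) by (unfold P4; ring); lra | assumption]. }
  assert (g 1 0 (-1) = c * P4 1 0 (-1)).
  { apply (trans_y g P4 c HL Hb 1 (-1) 0 (-1)); [replace (P4 1 (-1) (-1)) with (4) by (unfold P4; ring); lra | assumption]. }
  assert (g (-1) 0 0 = c * P4 (-1) 0 0).
  { apply (trans_z g P4 c HL Hb (-1) 0 0 1); [replace (P4 (-1) 0 1) with (4) by (unfold P4; ring); lra | assumption]. }
  assert (g 0 0 1 = c * P4 0 0 1).
  { apply (trans_x g P4 c HL Hb 0 1 0 (-1)); [replace (P4 (-1) 0 1) with (4) by (unfold P4; ring); lra | assumption]. }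
  assert (g 1 1 1 = c * P4 1 1 1).
  { apply (trans_x g P4 c HL Hb 1 1 1 (-1)); [replace (P4 (-1) 1 1) with (4) by (unfold P4; ring); lra | assumption]. }
  assert (g 0 (-1) 0 = c * P4 0 (-1) 0).
  { apply (trans_z g P4 c HL Hb 0 (-1) 0 1); [replace (P4 0 (-1) 1) with (4) by (unfold P4; ring); lra | assumption]. }
  assert (g 0 1 0 = c * P4 0 1 0).
  { apply (trans_x g P4 c HL Hb 1 0 0 (-1)); [replace (P4 (-1) 1 0) with (4) by (unfold P4; ring); lra | assumption]. }
  assert (g 0 0 (-1) = c * P4 0 0 (-1)).
  { apply (trans_y g P4 c HL Hb 0 (-1) 0 1); [replace (P4 0 1 (-1)) with (4) by (unfold P4; ring); lra | assumption]. }
  assert (g 1 0 0 = c * P4 1 0 0).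
  { apply (trans_y g P4 c HL Hb 1 0 0 (-1)); [replace (P4 1 (-1) 0) with (4) by (unfold P4; ring); lra | assumption]. }
  assert (g 0 0 0 = c * P4 0 0 0).
  { apply (trans_x g P4 c HL Hb 0 0 0 (-1)); [replace (P4 (-1) 0 0) with (1) by (unfold P4; ring); lra | assumption]. }
  assert (g (-1) (-1) 0 = c * P4 (-1) (-1) 0) by (apply (zero_pt g P4 c Hb); unfold P4; ring).
  assert (g (-1) 0 (-1) = c * P4 (-1) 0 (-1)) by (apply (zero_pt g P4 c Hb); unfold P4; ring).
  assert (g 0 (-1) (-1) = c * P4 0 (-1) (-1)) by (apply (zero_pt g P4 c Hb); unfold P4; ring).
  assert (g 0 1 1 = c * P4 0 1 1) by (apply (zero_pt g P4 c Hb); unfold P4; ring).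
  assert (g 1 0 1 = c * P4 1 0 1) by (apply (zero_pt g P4 c Hb); unfold P4; ring).
  assert (g 1 1 0 = c * P4 1 1 0) by (apply (zero_pt g P4 c Hb); unfold P4; ring).
  intros x y z [ -> | [ -> | -> ] ] [ -> | [ -> | -> ] ] [ -> | [ -> | -> ] ]; assumption.
Qed.

Lemma P4_ext : extremal QP222 P4 /\ extremal sigmaP222 P4.
Proof.
  apply (extremal_both P4 (-1) (-1) (-1) P4_lines P4_222).
  - apply (QP_of_sq _ _ P4_222 P4_p3 P4_sq).
  - replace (P4 (-1) (-1) (-1)) with (4) by (unfold P4; ring); lra.
  - apply P4_grid.
Qed.

Theorem proposition6 :
  (extremal QP222 P1 /\ extremal sigmaP222 P1) /\
  (extremal QP222 P2 /\ extremal sigmaP222 P2) /\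
  (extremal QP222 P3 /\ extremal sigmaP222 P3) /\
  (extremal QP222 P4 /\ extremal sigmaP222 P4).
Proof.
  split; [exact P1_ext|split; [exact P2_ext|split; [exact P3_ext|exact P4_ext]]].
Qed.
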